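(* Let $q\ge3$ be a prime power, $n\ge1$, and let $C\subseteq\mathbb{F}_q^n$ be a linear code of dimension $t$. Then $C\in\mathcal{A}^H_q(n)$ if and only if $C=C_q(n,S)$ for some $S\subseteq\{1,\dots,n\}$ with $|S|=t$.
   Context: For $v\in\mathbb{F}_q^n$, $\mathrm{wt}(v):=|\{i:v_i\ne0\}|$ and $\mathrm{maxwt}(C):=\max\{\mathrm{wt}(c):c\in C\}$. $\mathcal{A}^H_q(n)$ is the set of linear codes $C\subseteq\mathbb{F}_q^n$ with $\dim_{\mathbb{F}_q}(C)=\mathrm{maxwt}(C)$. For $S\subseteq\{1,\dots,n\}$, the free code is $C_q(n,S):=\{v\in\mathbb{F}_q^n: v_i=0\ \text{for all } i\notin S\}$. *)

(* Defs.v *)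
From HB Require Import structures.
From mathcomp Require Import all_boot all_order all_algebra all_field.
Set Implicit Arguments. Unset Strict Implicit. Unset Printing Implicit Defensive.
Import GRing.Theory.
Local Open Scope ring_scope.

Definition wt (F : finFieldType) (n : nat) (v : 'rV[F]_n) : nat :=
  #|[set i : 'I_n | v 0 i != 0]|.

Definition maxwt (F : finFieldType) (n : nat) (C : {vspace 'rV[F]_n}) : nat :=
  \max_(v : 'rV[F]_n | v \in C) wt v.

Definition in_AH (F : finFieldType) (n : nat) (C : {vspace 'rV[F]_n}) : Prop :=
  \dim C = maxwt C.

Definition free_code (F : finFieldType) (n : nat) (S : {set 'I_n}) : pred 'rV[F]_n :=
  [pred v : 'rV[F]_n | [forall i : 'I_n, (i \notin S) ==> (v 0 i == 0)]].

(* Main.v *)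
Require Import Defs.
From HB Require Import structures.
From mathcomp Require Import all_boot all_order all_algebra all_field.
Set Implicit Arguments. Unset Strict Implicit. Unset Printing Implicit Defensive.
Import GRing.Theory.
Local Open Scope ring_scope.

Section Aux.
Variables (F : finFieldType) (n : nat).

Lemma card_free (S : {set 'I_n}) : #|@free_code F n S| = (#|F| ^ #|S|)%N.
Proof.
have := card_pffun_on (0:F) S (predT : {pred F}).
have -> : #|(predT : {pred F})| = #|F| by apply: eq_card.
move=> <-.
pose f (v : 'rV[F]_n) := [ffun k => v 0 k].
have finj : injective f.
  by move=> u v /ffunP E; apply/rowP => k; have := E k; rewrite !ffunE.
rewrite -(card_imset (@free_code F n S) finj).
apply: eq_card => g; apply/imsetP/pffun_onP => [[v vS ->]|[sup _]].
  split; last by move=> x _.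
  apply/subsetP => k; rewrite !inE ffunE; apply: contraR => kS.
  by move: vS; rewrite inE => /forallP /(_ k); rewrite kS /= => /eqP ->; rewrite eqxx.
exists (\row_k g k); last by apply/ffunP => k; rewrite !ffunE mxE.
rewrite inE; apply/forallP => k; apply/implyP => kS; rewrite mxE.
by apply: contraR kS => gk; apply: (subsetP sup); rewrite inE.
Qed.

Lemma two_avoid (a : F) : (3 <= #|F|)%N -> exists2 l : F, l != 0 & l != a.
Proof.
move=> F3.
have : ~~ ([pred _ : F | true] \subset [:: 0; a]).
  apply/negP => /subset_leq_card H.
  have E : #|[pred _ : F | true]| = #|F| by apply: eq_card.
  have H2 := leq_trans H (card_size [:: (0:F); a]).
  by move: F3; rewrite -E; case: #|_| H2 => [|[|[|]]].
case/subsetPn => l _; rewrite !inE negb_or => /andP[h1 h2]; by exists l.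
Qed.

Lemma bwd (C : {vspace 'rV[F]_n}) (S : {set 'I_n}) :
  C =i @free_code F n S -> maxwt C = #|S|.
Proof.
move=> CS; apply/eqP; rewrite eqn_leq; apply/andP; split.
  apply/bigmax_leqP => v; rewrite CS inE => /forallP vS.
  apply: subset_leq_card; apply/subsetP => i; rewrite inE; apply: contraR => iS.
  by have := vS i; rewrite iS /= => /eqP ->; rewrite eqxx.
pose w : 'rV[F]_n := \row_k (k \in S)%:R.
have wC : w \in C.
  rewrite CS inE; apply/forallP => k; apply/implyP => kS.
  by rewrite mxE (negbTE kS).
rewrite /maxwt; apply: (bigmax_sup w wC).
rewrite /wt; apply: subset_leq_card; apply/subsetP => i iS.
by rewrite inE mxE iS oner_eq0.
Qed.


Lemma fwd (C : {vspace 'rV[F]_n}) : (3 <= #|F|)%N -> \dim C = maxwt C ->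
  exists S : {set 'I_n}, #|S| = \dim C /\ C =i @free_code F n S.
Proof.
move=> F3 dimE.
have C0 : (0 < #|[pred v : 'rV[F]_n | v \in C]|)%N.
  by apply/card_gt0P; exists 0; rewrite inE rpred0.
have [c cC cmax] := eq_bigmax_cond (fun v : 'rV[F]_n => wt v) C0.
set S := [set i | c 0 i != 0].
have tS : \dim C = #|S| by rewrite dimE /maxwt cmax.
exists S; split => //.
have wtmax v : v \in C -> (wt v <= #|S|)%N.
  by move=> vC; rewrite -tS dimE; apply: (bigmax_sup v vC).
have big v j : v \in C -> {in S, forall i, v 0 i != 0} -> j \notin S ->
    v 0 j != 0 -> False.
  move=> vC vS jS vj; have := wtmax v vC.
  have : (#|j |: S| <= wt v)%N.
    apply: subset_leq_card; apply/subsetP => i; rewrite in_setU1 [in X in _ -> X]inE.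
    by case/orP => [/eqP -> //|]; apply: vS.
  by rewrite cardsU1 jS /= => H1 H2; have := leq_trans H1 H2; rewrite ltnn.
pose pr (x : 'rV[F]_n) : 'rV[F]_n := \row_k (if k \in S then x 0 k else 0).
have prB x y : pr (x - y) = pr x - pr y.
  by apply/rowP => k; rewrite !mxE; case: ifP; rewrite ?subr0.
have pr0 x : x \in C -> pr x = 0 -> x = 0.
  move=> xC /rowP px; apply/rowP => j; rewrite mxE; apply/eqP/negPn/negP => xj.
  have jS : j \notin S.
    by apply/negP => jS; have := px j; rewrite !mxE jS => /eqP; rewrite (negbTE xj).
  apply: (big (c + x) j); first by rewrite rpredD.
  - move=> i iS; have := px i; rewrite !mxE iS => ->; rewrite addr0.
    by move: iS; rewrite inE.
  - done.
  - have : c 0 j = 0 by apply/eqP; move: jS; rewrite inE negbK.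
    by rewrite !mxE => ->; rewrite add0r.
have prI : {in C &, injective pr}.
  move=> x y xC yC E; apply/eqP; rewrite -subr_eq0; apply/eqP.
  by apply: pr0; [rewrite rpredB | rewrite prB E subrr].
have cardI : #|[set pr x | x in C]| = #|@free_code F n S|.
  by rewrite card_in_imset // card_vspace card_free tS.
have IS : [set pr x | x in C] =i @free_code F n S.
  apply/subset_cardP => //; apply/subsetP => v /imsetP [x _ ->].
  rewrite inE; apply/forallP => k; apply/implyP => kS.
  by rewrite mxE (negbTE kS).
pose u (i : 'I_n) : 'rV[F]_n := \row_k (k == i)%:R.
pose e i := odflt 0 [pick x | (x \in C) && (pr x == u i)].
have eP i : i \in S -> e i \in C /\ forall k, k \in S -> e i 0 k = (k == i)%:R.
  move=> iS.
  have : u i \in [set pr x | x in C].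
    rewrite IS inE; apply/forallP => k; apply/implyP => kS; rewrite mxE.
    have ki : k != i by apply: contraNneq kS => ->.
    by rewrite (negbTE ki).
  case/imsetP => x0 x0C ex0.
  rewrite /e; case: pickP => [x /andP [xC /eqP px] /=| /(_ x0)]; last first.
    by rewrite x0C ex0 eqxx.
  split => // k kS; have := congr1 (fun v : 'rV[F]_n => v 0 k) px.
  by rewrite /= !mxE kS.
have outS d j : d \in C -> j \notin S -> d 0 j = 0.
  move=> dC jS; apply/eqP/negPn/negP => dj.
  have cj : c 0 j = 0 by apply/eqP; move: jS; rewrite inE negbK.
  case: (pickP [pred i | (i \in S) && (e i 0 j != 0)]) => [i /andP [iS eij] | none].
    have [l l0 lc] := two_avoid (- c 0 i) F3.
    have [eC eE] := eP i iS.
    apply: (big (c + l *: e i) j) => //.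
    - by rewrite rpredD // rpredZ.
    - move=> k kS; rewrite !mxE eE //.
      case: (eqVneq k i) => [-> | ki].
        by rewrite /= mulr1 addrC addr_eq0.
      by rewrite mulr0 addr0; move: kS; rewrite inE.
    - by rewrite !mxE cj add0r mulf_neq0.
  pose d' := \sum_(i in S) d 0 i *: e i.
  have d'C : d' \in C.
    by apply: rpred_sum => i iS; rewrite rpredZ //; case: (eP i iS).
  have d'j : d' 0 j = 0.
    rewrite /d' summxE big1 // => i iS; rewrite mxE.
    by have := none i; rewrite /= iS /= => /negbFE/eqP ->; rewrite mulr0.
  have : pr d' = pr d.
    apply/rowP => k; rewrite !mxE; case: ifP => // kS.
    rewrite /d' summxE (bigD1 k) //= big1 => [|i /andP [iS ik]].
      by rewrite mxE (proj2 (eP k kS)) // eqxx mulr1 addr0.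
    by rewrite mxE (proj2 (eP i iS)) // eq_sym (negbTE ik) mulr0.
  move/(prI _ _ d'C dC) => dd.
  by move: dj; rewrite -dd d'j eqxx.
move=> v; apply/idP/idP => [vC | vS].
  rewrite inE; apply/forallP => k; apply/implyP => kS.
  by rewrite outS.
rewrite -IS in vS; case/imsetP: vS => x xC ->.
have -> : pr x = x.
  by apply/rowP => k; rewrite mxE; case: ifPn => // kS; rewrite outS.
done.
Qed.

Theorem proposition2p6' (t : nat) (C : {vspace 'rV[F]_n}) :
  (3 <= #|F|)%N -> (1 <= n)%N -> \dim C = t ->
  (in_AH C <-> exists S : {set 'I_n}, #|S| = t /\ C =i @free_code F n S).
Proof.
move=> F3 _ <-; split; first by apply: fwd.
case=> S [SC CS]; rewrite /in_AH (bwd CS) //.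
Qed.

End Aux.

Theorem proposition2p6 (F : finFieldType) (n t : nat)
    (C : {vspace 'rV[F]_n}) :
  (3 <= #|F|)%N -> (1 <= n)%N -> \dim C = t ->
  (in_AH C <-> exists S : {set 'I_n}, #|S| = t /\ C =i @free_code F n S).
Proof. exact: proposition2p6'. Qed.
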